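(* Consider the iterates of the partially Jacobi 3-block algorithm (context) and fix $k\ge0$ with $\eta_k\in(0,1/\nu)$. Then for every $w=(x;y;z;\lambda)\in\Omega$, $$F(w)-F(\tilde w^k)+\langle w-\tilde w^k,\mathcal J(w)\rangle\ge(w-\tilde w^k)^\top Q_k(w^k-\tilde w^k)+\zeta^k(x),$$ where $$Q_k=\begin{bmatrix}\mathcal D_k&0&0&0\\0&L_1+\beta B^\top B&0&-\tau B^\top\\0&0&L_2+\beta C^\top C&-\tau C^\top\\0&-B&-C&\frac1\beta I\end{bmatrix}.$$
   Context: Setting. $\mathcal X\subset\mathbb R^{n_1}$, $\mathcal Y\subset\mathbb R^{n_2}$, $\mathcal Z\subset\mathbb R^{n_3}$ are nonempty closed convex sets; $A\in\mathbb R^{n\times n_1}$, $B\in\mathbb R^{n\times n_2}$, $C\in\mathbb R^{n\times n_3}$, $b\in\mathbb R^n$; $g:\mathcal Y\to\mathbb R\cup\{+\infty\}$ and $l:\mathcal Z\to\mathbb R\cup\{+\infty\}$ are proper closed convex; $f=\frac1N\sum_{j=1}^Nf_j$, each $f_j$ real-valued, convex and continuously differentiable on an open set containing $\mathcal X$. Problem: $\min\{f(x)+g(y)+l(z): Ax+By+Cz=b,\ x\in\mathcal X,y\in\mathcal Y,z\in\mathcal Z\}$. A fixed symmetric positive definite $H$ and $\nu>0$ satisfy $\|\nabla f_j(x_1)-\nabla f_j(x_2)\|_{H^{-1}}\le\nu\|x_1-x_2\|_H$ for all $x_1,x_2\in\mathcal X$, all $j$. For symmetric $G$, $\|v\|_G^2:=v^\top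 Gv$; $G_1\succeq G_2$ means $G_1-G_2$ is positive semidefinite. $\Delta:=\{(\tau,s):\tau+s>0,\ \tau\le1,\ -\tau^2-s^2-\tau s+\tau+s+1\ge0\}$. Subroutine xsub. Inputs: $x^k\in\mathcal X$, $\breve x^k$, $h\in\mathbb R^{n_1}$, an integer $m_k\ge1$, $\eta_k>0$, a symmetric matrix $M_k$. Set $x_1=x^k$, $\breve x_1=\breve x^k$. For $t=1,\dots,m_k$: draw $\xi_t$ uniformly from $\{1,\dots,N\}$, independently of everything generated before; set $\beta_t=2/(t+1)$, $\gamma_t=2/(t\eta_k)$, $\hat x_t=\beta_t\breve x_t+(1-\beta_t)x_t$, $d_t=\nabla f_{\xi_t}(\hat x_t)+e_t$ where $e_t$ is a random vector whose conditional expectation given all previously generated random quantities and $\xi_t$ is $0$; $\breve x_{t+1}=\arg\min_{x\in\mathcal X}\{\langle d_t+h,x\rangle+\frac{\gamma_t}2\|x-\breve x_t\|_H^2+\frac12\|x-x^k\|_{M_k}^2\}$; $x_{t+1}=\beta_t\breve x_{t+1}+(1-\beta_t)x_t$. Output $x^{k+1}=x_{m_k+1}$, $\breve x^{k+1}=\breve x_{m_k+1}$. Put $\delta_t=\nabla f(\hat x_t)-d_t$ (inner quantities of outer iteration $k$), and for $x\in\mathcal X$ $$\zeta^k(x)=\frac{2}{m_k(m_k+1)}\Big[\frac1{\eta_k}\big(\|x-\breve x^{k+1}\|_H^2-\|x-\breve x^k\|_H^2\big)-\sum_{t=1}^{m_k}t\langle\delta_t,\breve x_t-x\rangle-\frac{\eta_k}{4(1-\eta_k\nu)}\sum_{t=1}^{m_k}t^2\|\delta_t\|_{H^{-1}}^2\Big].$$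 Partially Jacobi 3-block algorithm. Parameters: $\beta>0$, $H$, $(\tau,s)\in\Delta$, symmetric matrices $L_1\in\mathbb R^{n_2\times n_2}$, $L_2\in\mathbb R^{n_3\times n_3}$. Start: $(x^0,y^0,z^0,\lambda^0)\in\mathcal X\times\mathcal Y\times\mathcal Z\times\mathbb R^n$, $\breve x^0=x^0$. For $k=0,1,\dots$: choose integer $m_k\ge1$, $\eta_k>0$, symmetric $M_k$ with $\mathcal D_k:=M_k-\beta A^\top A\succeq0$; $h^k=-A^\top[\lambda^k-\beta(Ax^k+By^k+Cz^k-b)]$; $(x^{k+1},\breve x^{k+1})$ from xsub with inputs $x^k,\breve x^k,h^k,m_k,\eta_k,M_k$; $\lambda^{k+1/2}=\lambda^k-\tau\beta(Ax^{k+1}+By^k+Cz^k-b)$; $y^{k+1}\in\arg\min_{y\in\mathcal Y}g(y)+\frac\beta2\|Ax^{k+1}+By+Cz^k-b-\lambda^{k+1/2}/\beta\|^2+\frac12\|y-y^k\|_{L_1}^2$; $z^{k+1}\in\arg\min_{z\in\mathcal Z}l(z)+\frac\beta2\|Ax^{k+1}+By^k+Cz-b-\lambda^{k+1/2}/\beta\|^2+\frac12\|z-z^k\|_{L_2}^2$; $\lambda^{k+1}=\lambda^{k+1/2}-s\beta(Ax^{k+1}+By^{k+1}+Cz^{k+1}-b)$. (Minimizers are assumed to exist.) Notation. $\Omega=\mathcal X\times\mathcal Y\times\mathcal Z\times\mathbb R^n$; $w=(x;y;z;\lambda)$; $\mathcal Kw=Ax+By+Cz$; $F(w)=f(x)+g(y)+l(z)$;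 $\mathcal J(w)=(-A^\top\lambda;-B^\top\lambda;-C^\top\lambda;\mathcal Kw-b)$; $w^k=(x^k;y^k;z^k;\lambda^k)$; $\tilde\lambda^k=\lambda^k-\beta(Ax^{k+1}+By^k+Cz^k-b)$; $\tilde w^k=(x^{k+1};y^{k+1};z^{k+1};\tilde\lambda^k)$. *)

(* Defs.v *)
From HB Require Import structures.
From mathcomp Require Import all_boot all_order all_algebra.
From mathcomp Require Import all_classical all_reals all_analysis.
Set Implicit Arguments. Unset Strict Implicit. Unset Printing Implicit Defensive.
Import Order.TTheory GRing.Theory Num.Theory.
Import numFieldNormedType.Exports.
Local Open Scope classical_set_scope.
Local Open Scope ring_scope.

Section Defs.
Variable R : realType.

Definition dot n (u v : 'cV[R]_n) : R := (u^T *m v) 0 0.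

Definition sqnorm n (G : 'M[R]_n) (v : 'cV[R]_n) : R := (v^T *m G *m v) 0 0.

Definition symmx n (G : 'M[R]_n) : Prop := G^T = G.

Definition psd n (G : 'M[R]_n) : Prop := forall v : 'cV[R]_n, 0 <= sqnorm G v.

Definition spd n (G : 'M[R]_n) : Prop :=
  symmx G /\ forall v : 'cV[R]_n, v != 0 -> 0 < sqnorm G v.

Definition convex_set n (S : set 'cV[R]_n) : Prop :=
  forall u v t, S u -> S v -> 0 <= t <= 1 -> S (t *: u + (1 - t) *: v).

Definition ncc_set n (S : set 'cV[R]_n) : Prop :=
  S !=set0 /\ closed S /\ convex_set S.

Definition convex_fun_on n (S : set 'cV[R]_n) (h : 'cV[R]_n -> R) : Prop :=
  forall u v t, S u -> S v -> 0 <= t <= 1 ->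
    h (t *: u + (1 - t) *: v) <= t * h u + (1 - t) * h v.

Definition C1_with_grad n (U : set 'cV[R]_n) (h : 'cV[R]_n -> R)
    (gr : 'cV[R]_n -> 'cV[R]_n) : Prop :=
  open U /\ forall x, U x ->
    [/\ differentiable h x, (forall v, 'D_v h x = dot (gr x) v)
      & {for x, continuous gr}].

Definition proper_closed_convex n (S : set 'cV[R]_n) (h : 'cV[R]_n -> \bar R)
  : Prop :=
  [/\ (forall u, S u -> h u != -oo%E),
      (exists u, S u /\ h u \is a fin_num),
      closed [set p : 'cV[R]_n * R | S p.1 /\ (h p.1 <= p.2%:E)%E]
    & (forall u v t, S u -> S v -> 0 < t < 1 ->
        (h (t *: u + (1 - t) *: v)%R <= t%:E * h u + (1 - t)%:E * h v)%E)].

Definition Delta (tau s : R) : Prop :=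
  0 < tau + s /\ tau <= 1 /\ 0 <= - tau ^+ 2 - s ^+ 2 - tau * s + tau + s + 1.

Definition is_argmin n (S : set 'cV[R]_n) (obj : 'cV[R]_n -> R) m : Prop :=
  S m /\ forall u, S u -> obj m <= obj u.

Definition is_argmin_e n (S : set 'cV[R]_n) (obj : 'cV[R]_n -> \bar R) m : Prop :=
  S m /\ forall u, S u -> (obj m <= obj u)%E.

End Defs.

Section Algo.
Variable R : realType.

Definition wvec n1 n2 n3 n (x : 'cV[R]_n1) (y : 'cV[R]_n2) (z : 'cV[R]_n3)
  (lam : 'cV[R]_n) : 'cV[R]_(n1 + (n2 + (n3 + n))) :=
  col_mx x (col_mx y (col_mx z lam)).

Definition Jop n1 n2 n3 n (A : 'M[R]_(n, n1)) (B : 'M[R]_(n, n2))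
  (C : 'M[R]_(n, n3)) (b : 'cV[R]_n) (x : 'cV[R]_n1) (y : 'cV[R]_n2)
  (z : 'cV[R]_n3) (lam : 'cV[R]_n) : 'cV[R]_(n1 + (n2 + (n3 + n))) :=
  wvec (- A^T *m lam) (- B^T *m lam) (- C^T *m lam)
       (A *m x + B *m y + C *m z - b).

(* the block matrix Q_k, with D = D_k = M_k - beta A^T A *)
Definition Qmat n1 n2 n3 n (D : 'M[R]_n1) (L1 : 'M[R]_n2) (L2 : 'M[R]_n3)
  (B : 'M[R]_(n, n2)) (C : 'M[R]_(n, n3)) (beta tau : R)
  : 'M[R]_(n1 + (n2 + (n3 + n))) :=
  block_mx D 0 0
    (block_mx (L1 + beta *: (B^T *m B)) (row_mx (0 : 'M[R]_(n2, n3)) (- tau *: B^T))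
              (col_mx (0 : 'M[R]_(n3, n2)) (- B))
              (block_mx (L2 + beta *: (C^T *m C)) (- tau *: C^T)
                        (- C) (beta^-1)%:M)).

(* zeta^k(x); delta t and xbin t are the inner quantities delta_t and
   breve x_t (t = 1..m), xbk = breve x^k, xbk1 = breve x^{k+1} *)
Definition zeta n1 (H : 'M[R]_n1) (nu eta : R) (m : nat) (xbk xbk1 : 'cV[R]_n1)
  (delta xbin : nat -> 'cV[R]_n1) (x : 'cV[R]_n1) : R :=
  2 / (m%:R * (m%:R + 1)) *
  (eta^-1 * (sqnorm H (x - xbk1) - sqnorm H (x - xbk))
   - \sum_(1 <= t < m.+1) t%:R * dot (delta t) (xbin t - x)
   - eta / (4 * (1 - eta * nu)) *
       \sum_(1 <= t < m.+1) (t%:R ^+ 2 * sqnorm (invmx H) (delta t))).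

End Algo.

(* Main.v *)
Require Import Defs.
From HB Require Import structures.
From mathcomp Require Import all_boot all_order all_algebra.
From mathcomp Require Import all_classical all_reals all_analysis.
From mathcomp Require Import ring lra.
Import Order.TTheory GRing.Theory Num.Theory.
Import numFieldNormedType.Exports.
Local Open Scope classical_set_scope.
Local Open Scope ring_scope.
Set Implicit Arguments. Unset Strict Implicit. Unset Printing Implicit Defensive.

Section LinAlg.
Variable R : realType.

Definition bf n (G : 'M[R]_n) (u v : 'cV[R]_n) : R := (u^T *m G *m v) 0 0.

Lemma sqnorm_bf n (G : 'M[R]_n) v : sqnorm G v = bf G v v.
Proof. by []. Qed.

Lemma bfDl n (G : 'M[R]_n) u1 u2 v : bf G (u1 + u2) v = bf G u1 v + bf G u2 v.
Proof. by rewrite /bf linearD /= !mulmxDl mxE. Qed.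
Lemma bfDr n (G : 'M[R]_n) u v1 v2 : bf G u (v1 + v2) = bf G u v1 + bf G u v2.
Proof. by rewrite /bf mulmxDr mxE. Qed.
Lemma bfZl n (G : 'M[R]_n) k u v : bf G (k *: u) v = k * bf G u v.
Proof. by rewrite /bf linearZ /= -!scalemxAl mxE. Qed.
Lemma bfZr n (G : 'M[R]_n) k u v : bf G u (k *: v) = k * bf G u v.
Proof. by rewrite /bf -scalemxAr mxE. Qed.
Lemma bfNl n (G : 'M[R]_n) u v : bf G (- u) v = - bf G u v.
Proof. by rewrite -scaleN1r bfZl mulN1r. Qed.
Lemma bfNr n (G : 'M[R]_n) u v : bf G u (- v) = - bf G u v.
Proof. by rewrite -scaleN1r bfZr mulN1r. Qed.
Lemma bfBl n (G : 'M[R]_n) u1 u2 v : bf G (u1 - u2) v = bf G u1 v - bf G u2 v.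
Proof. by rewrite bfDl bfNl. Qed.
Lemma bfBr n (G : 'M[R]_n) u v1 v2 : bf G u (v1 - v2) = bf G u v1 - bf G u v2.
Proof. by rewrite bfDr bfNr. Qed.
Lemma bf0l n (G : 'M[R]_n) v : bf G 0 v = 0.
Proof. by rewrite -(scale0r 0) bfZl mul0r. Qed.
Lemma bf0r n (G : 'M[R]_n) v : bf G v 0 = 0.
Proof. by rewrite -(scale0r 0) bfZr mul0r. Qed.

Lemma tr11 (M : 'M[R]_1) : M^T 0 0 = M 0 0.
Proof. by rewrite mxE. Qed.

Lemma bfC n (G : 'M[R]_n) u v : symmx G -> bf G u v = bf G v u.
Proof.
move=> hG; rewrite /bf -tr11 !trmx_mul trmxK hG mulmxA //.
Qed.

Lemma dot_bf n (u v : 'cV[R]_n) : dot u v = bf 1%:M u v.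
Proof. by rewrite /dot /bf mulmx1. Qed.

Lemma dotC n (u v : 'cV[R]_n) : dot u v = dot v u.
Proof. by rewrite !dot_bf bfC // /symmx trmx1. Qed.

Lemma dotDl n (u1 u2 v : 'cV[R]_n) : dot (u1 + u2) v = dot u1 v + dot u2 v.
Proof. by rewrite !dot_bf bfDl. Qed.
Lemma dotDr n (u v1 v2 : 'cV[R]_n) : dot u (v1 + v2) = dot u v1 + dot u v2.
Proof. by rewrite !dot_bf bfDr. Qed.
Lemma dotZl n k (u v : 'cV[R]_n) : dot (k *: u) v = k * dot u v.
Proof. by rewrite !dot_bf bfZl. Qed.
Lemma dotZr n k (u v : 'cV[R]_n) : dot u (k *: v) = k * dot u v.
Proof. by rewrite !dot_bf bfZr. Qed.
Lemma dotNl n (u v : 'cV[R]_n) : dot (- u) v = - dot u v.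
Proof. by rewrite !dot_bf bfNl. Qed.
Lemma dotNr n (u v : 'cV[R]_n) : dot u (- v) = - dot u v.
Proof. by rewrite !dot_bf bfNr. Qed.
Lemma dotBl n (u1 u2 v : 'cV[R]_n) : dot (u1 - u2) v = dot u1 v - dot u2 v.
Proof. by rewrite dotDl dotNl. Qed.
Lemma dotBr n (u v1 v2 : 'cV[R]_n) : dot u (v1 - v2) = dot u v1 - dot u v2.
Proof. by rewrite dotDr dotNr. Qed.

Lemma dot_mull m n (A : 'M[R]_(m, n)) u v : dot (A *m u) v = dot u (A^T *m v).
Proof. by rewrite /dot trmx_mul mulmxA. Qed.

End LinAlg.

Section Calc.
Variable R : realType.

Lemma grad_ineq n (X U : set 'cV[R]_n) (h : 'cV[R]_n -> R) gr :
  Defs.convex_set X -> X `<=` U -> convex_fun_on X h -> C1_with_grad U h gr ->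
  forall a u, X a -> X u -> h a + dot (gr a) (u - a) <= h u.
Proof.
move=> cX XU ch [oU hU] a u Xa Xu.
have [da Dv _] := hU a (XU a Xa).
rewrite -Dv -lerBrDl.
have dv := @diff_derivable _ _ _ _ _ (u - a) da.
have cv : (fun t : R => t^-1 *: ((h \o shift a) (t *: (u - a)) - h a)) @ 0^'+
   --> 'D_(u - a) h a.
  apply: cvg_dnbhs_at_right; exact: dv.
apply: (cvgr_to_le cv).
near=> t.
have t0 : 0 < t by near: t; exact: nbhs_right_gt.
have t1 : t < 1 by near: t; apply: nbhs_right_lt; exact: ltr01.
rewrite /=.
have -> : t *: (u - a) + a = t *: u + (1 - t) *: a.
  by rewrite scalerBr scalerBl scale1r addrA addrAC -addrA [- _ + _]addrC.
have := ch u a t Xu Xa; rewrite ltW // ltW // => /(_ isT) hc.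
rewrite /GRing.scale /= ler_pdivrMl //.
by rewrite mulrBr; lra.
Unshelve. all: by end_near.
Qed.


Lemma line_derive n (h : 'cV[R]_n -> R) (a v : 'cV[R]_n) (s : R) :
  derivable h (s *: v + a) v ->
  is_derive s 1 (fun t : R => h (t *: v + a)) ('D_v h (s *: v + a)).
Proof.
move=> dh.
have E : (fun t : R => t^-1 *: (((fun t : R => h (t *: v + a)) \o shift s) (t *: 1)
             - h (s *: v + a))) =
         (fun t : R => t^-1 *: ((h \o shift (s *: v + a)) (t *: v) - h (s *: v + a))).
  apply/funext => t /=; congr (_ *: (h _ - _)).
  by rewrite scalerDl addrA /GRing.scale /= mulr1.
by split; rewrite /derivable /derive ?E.
Qed.

Lemma descent n (X U : set 'cV[R]_n) (h : 'cV[R]_n -> R) gr (H : 'M[R]_n) (nu : R) :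
  Defs.convex_set X -> X `<=` U -> C1_with_grad U h gr ->
  (forall x1 x2, X x1 -> X x2 -> dot (gr x1 - gr x2) (x1 - x2) <= nu * sqnorm H (x1 - x2)) ->
  forall a u, X a -> X u -> h u <= h a + dot (gr a) (u - a) + nu / 2 * sqnorm H (u - a).
Proof.
move=> cX XU [oU hU] hL a u Xa Xu.
set v := u - a; set K := sqnorm H v; set D := dot (gr a) v.
have Xs : forall s : R, 0 <= s <= 1 -> X (s *: v + a).
  move=> s /andP[s0 s1].
  have -> : s *: v + a = s *: u + (1 - s) *: a.
    by rewrite /v scalerBr scalerBl scale1r addrA addrAC -addrA [- _ + _]addrC.
  by apply: (cX _ _ _ Xu Xa); rewrite s0 s1.
pose phi := fun s : R => h (s *: v + a) - (s * D + nu / 2 * K * (s * s)).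
have dphi : forall s : R, 0 <= s <= 1 -> is_derive s 1 phi
     ('D_v h (s *: v + a) - (D + nu / 2 * K * (2 * s))).
  move=> s hs.
  have [ds Dv _] := hU _ (XU _ (Xs s hs)).
  have hh := line_derive (@diff_derivable _ _ _ _ _ v ds).
  have h1 : is_derive s 1 (id : R -> R) 1 by exact: is_derive_id.
  have h2 := is_deriveM h1 (is_derive_cst D s 1).
  have h3 := is_deriveM h1 h1.
  have h4 := is_deriveM (is_derive_cst (nu / 2 * K) s 1) h3.
  have h5 := is_deriveB hh (is_deriveD h2 h4).
  have -> : D + nu / 2 * K * (2 * s) = (id s *: 0 + cst D s *: 1)
      + (cst (nu / 2 * K) s *: (id s *: 1 + id s *: 1) + (id * id) s *: 0).
    rewrite /= /GRing.scale /=; ring.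
  exact: h5.
have hM := @MVT _ phi (fun s => 'D_v h (s *: v + a) - (D + nu / 2 * K * (2 * s)))
   0 1 ltr01.
have [c c01 hc] : exists2 c : R, c \in `]0, 1[ & phi 1 - phi 0 = 
   ('D_v h (c *: v + a) - (D + nu / 2 * K * (2 * c))) * (1 - 0).
  apply: hM.
  - move=> x; rewrite in_itv /= => /andP[x0 x1].
    by apply: dphi; rewrite ltW // ltW.
  - apply: derivable_within_continuous => x; rewrite in_itv /= => hx.
    by case: (dphi x hx).
have c0 : 0 < c by move: c01; rewrite in_itv /= => /andP[].
have c1 : c < 1 by move: c01; rewrite in_itv /= => /andP[].
have hcx : 0 <= c <= 1 by rewrite !ltW.
have [_ Dv _] := hU _ (XU _ (Xs c hcx)).
have key : 'D_v h (c *: v + a) - D <= nu * c * K.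
  rewrite Dv /D -dotBl.
  have := hL _ _ (Xs c hcx) Xa.
  rewrite addrK dotZr /K sqnorm_bf bfZl bfZr -sqnorm_bf.
  move=> hh.
  have : c * dot (gr (c *: v + a) - gr a) v <= c * (nu * c * sqnorm H v) by lra.
  by rewrite ler_pM2l.
move: hc; rewrite /phi scale1r scale0r add0r /v subrK -/v subr0 mulr1.
move=> hc.
have : h u - (D + nu / 2 * K) - h a <= 0.
  have -> : h u - (D + nu / 2 * K) - h a = ('D_v h (c *: v + a) - (D + nu / 2 * K * (2 * c))).
    rewrite -[RHS]mulr1 -hc; ring.
  have -> : 'D_v h (c *: v + a) - (D + nu / 2 * K * (2 * c)) = ('D_v h (c *: v + a) - D) - nu * c * K.
    by field.
  lra.
lra.
Qed.

End Calc.

Section Quad.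
Variable R : realType.

Lemma sqnorm_shift n (G : 'M[R]_n) a w (e : R) :
  sqnorm G (a + e *: w) = sqnorm G a + e * (bf G a w + bf G w a) + e ^+ 2 * sqnorm G w.
Proof. rewrite !sqnorm_bf !bfDl !bfDr !bfZl !bfZr; ring. Qed.

Lemma small_pos (L K : R) :
  (forall e : R, 0 < e <= 1 -> 0 <= e * L + e ^+ 2 * K) -> 0 <= L.
Proof.
move=> h; rewrite leNgt; apply/negP => L0.
set e := - L / (2 * (`|K| + - L)).
have hKL : 0 < `|K| + - L by rewrite ltr_wpDl // oppr_gt0.
have e0 : 0 < e by rewrite /e divr_gt0 // ?oppr_gt0 // mulr_gt0.
have e1 : e <= 1.
  have := normr_ge0 K.
  rewrite /e ler_pdivrMr ?mulr_gt0 //; lra.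
have := h e; rewrite e0 e1 => /(_ isT).
have eK : e * `|K| <= - L / 2.
  rewrite /e mulrAC ler_pdivrMr ?mulr_gt0 //.
  have hK := normr_ge0 K.
  have -> : - L / 2 * (2 * (`|K| - L)) = - L * `|K| + L * L by field.
  have := sqr_ge0 L; rewrite expr2; lra.
have : e * K <= e * `|K| by rewrite ler_pM2l // ler_norm.
move=> h2 h3.
have : 0 <= e * (L + e * K) by rewrite mulrDr mulrA -expr2.
rewrite pmulr_rge0 //; lra.
Qed.

Lemma argmin3 n (X : set 'cV[R]_n) (cX : Defs.convex_set X) (c : 'cV[R]_n) (al be : R)
  (G1 G2 : 'M[R]_n) (p1 p2 u : 'cV[R]_n) :
  is_argmin X (fun u => dot c u + al * sqnorm G1 (u - p1) + be * sqnorm G2 (u - p2)) u ->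
  forall xx, X xx ->
  dot c u + al * sqnorm G1 (u - p1) + be * sqnorm G2 (u - p2)
    + al * sqnorm G1 (xx - u) + be * sqnorm G2 (xx - u)
  <= dot c xx + al * sqnorm G1 (xx - p1) + be * sqnorm G2 (xx - p2).
Proof.
move=> [Xu hmin] xx Xxx.
set w := xx - u.
set L := dot c w + al * (bf G1 (u - p1) w + bf G1 w (u - p1))
                 + be * (bf G2 (u - p2) w + bf G2 w (u - p2)).
set K := al * sqnorm G1 w + be * sqnorm G2 w.
have E : forall e : R, e *: xx + (1 - e) *: u = u + e *: w.
  by move=> e; rewrite /w scalerBr scalerBl scale1r addrCA.
have Ee : forall (e : R) p, e *: xx + (1 - e) *: u - p = (u - p) + e *: w.
  by move=> e p; rewrite E addrAC.
have Hobj : forall e : R,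
   dot c (e *: xx + (1 - e) *: u) + al * sqnorm G1 (e *: xx + (1 - e) *: u - p1)
     + be * sqnorm G2 (e *: xx + (1 - e) *: u - p2)
   = dot c u + al * sqnorm G1 (u - p1) + be * sqnorm G2 (u - p2) + (e * L + e ^+ 2 * K).
  move=> e; rewrite !Ee E !sqnorm_shift dotDr dotZr /L /K; ring.
have L0 : 0 <= L.
  apply: (@small_pos L K) => e /andP[e0 e1].
  have he : 0 <= e <= 1 by rewrite e1 ltW.
  have := hmin _ (cX _ _ e Xxx Xu he).
  rewrite Hobj; lra.
have := Hobj 1; rewrite scale1r subrr scale0r addr0 => ->.
rewrite /K; lra.
Qed.

End Quad.

Section Step.
Variable R : realType.

Lemma jensen n (G : 'M[R]_n) (l : R) u v : psd G -> 0 <= l <= 1 ->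
  sqnorm G (l *: u + (1 - l) *: v) <= l * sqnorm G u + (1 - l) * sqnorm G v.
Proof.
move=> hG /andP[l0 l1].
have E : l * sqnorm G u + (1 - l) * sqnorm G v - sqnorm G (l *: u + (1 - l) *: v)
   = l * (1 - l) * sqnorm G (u - v).
  rewrite !sqnorm_bf !bfDl !bfDr ?bfNl ?bfNr !bfZl !bfZr; ring.
have : 0 <= l * (1 - l) * sqnorm G (u - v).
  by rewrite mulr_ge0 // mulr_ge0 // subr_ge0.
rewrite -E; lra.
Qed.

Lemma sqnormZ n (G : 'M[R]_n) (k : R) v : sqnorm G (k *: v) = k ^+ 2 * sqnorm G v.
Proof. by rewrite !sqnorm_bf bfZl bfZr mulrA expr2. Qed.

Definition PsiF n (f : 'cV[R]_n -> R) h (M : 'M[R]_n) xk u :=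
  f u + dot h u + 1 / 2 * sqnorm M (u - xk).

Lemma step n (X : set 'cV[R]_n) (cX : Defs.convex_set X) (f : 'cV[R]_n -> R) gF
  (H Hi M : 'M[R]_n) (nu : R) (h xk b b' x x' xx d : 'cV[R]_n) (bt gt : R) :
  (forall a u, X a -> X u -> f a + dot (gF a) (u - a) <= f u) ->
  (forall a u, X a -> X u -> f u <= f a + dot (gF a) (u - a) + nu / 2 * sqnorm H (u - a)) ->
  (forall u v (c : R), 0 < c -> dot u v <= sqnorm Hi u / (2 * c) + c / 2 * sqnorm H v) ->
  psd M -> 0 < bt <= 1 -> 0 < gt - nu * bt ->
  X b -> X x -> X xx ->
  is_argmin X (fun u => dot (d + h) u + gt / 2 * sqnorm H (u - b) + 1 / 2 * sqnorm M (u - xk)) b' ->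
  x' = bt *: b' + (1 - bt) *: x ->
  PsiF f h M xk x' - PsiF f h M xk xx + 1 / 2 * sqnorm M (xx - x')
  <= (1 - bt) * (PsiF f h M xk x - PsiF f h M xk xx + 1 / 2 * sqnorm M (xx - x))
     + bt * (dot (gF (bt *: b + (1 - bt) *: x) - d) (b - xx)
             + sqnorm Hi (gF (bt *: b + (1 - bt) *: x) - d) / (2 * (gt - nu * bt))
             + gt / 2 * (sqnorm H (xx - b) - sqnorm H (xx - b'))).
Proof.
move=> hgrad hdesc hyoung hM /andP[bt0 bt1] hc Xb Xx Xxx hmin ex'.
set xh := bt *: b + (1 - bt) *: x.
set del := gF xh - d.
have hbt : 0 <= bt <= 1 by rewrite ltW.
have Xb' : X b' by case: hmin.
have Xxh : X xh by apply: cX.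
have Xx' : X x' by rewrite ex'; apply: cX.
set g := gF xh.
have ed : d = g - del by rewrite /del opprB addrC subrK.
have V1 : x' - xh = bt *: (b' - b).
  by rewrite ex' /xh; apply/matrixP => i j; rewrite !mxE; ring.
have V2 : x - xh = bt *: (x - b).
  by rewrite /xh; apply/matrixP => i j; rewrite !mxE; ring.
have V3 : xx - xh = xx - bt *: b - (1 - bt) *: x.
  by rewrite /xh; apply/matrixP => i j; rewrite !mxE; ring.
have V4 : xx - x' = bt *: (xx - b') + (1 - bt) *: (xx - x).
  by rewrite ex'; apply/matrixP => i j; rewrite !mxE; ring.
have V5 : x' - xk = bt *: (b' - xk) + (1 - bt) *: (x - xk).
  by rewrite ex'; apply/matrixP => i j; rewrite !mxE; ring.
have F1 := hdesc _ _ Xxh Xx'.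
rewrite -/g V1 dotZr sqnormZ dotBr in F1.
have F2 := hgrad _ _ Xxh Xx.
rewrite -/g V2 dotZr dotBr in F2.
have F3 := hgrad _ _ Xxh Xxx.
rewrite -/g V3 !dotBr !dotZr in F3.
have F4 := argmin3 cX hmin Xxx.
rewrite ed !dotDl ?dotNl in F4.
have F5 := hyoung del (b' - b) _ hc.
rewrite dotBr in F5.
have J1 := jensen (b' - xk) (x - xk) hM hbt.
rewrite -V5 in J1.
have J2 := jensen (xx - b') (xx - x) hM hbt.
rewrite -V4 in J2.
have eh : dot h x' = bt * dot h b' + (1 - bt) * dot h x.
  by rewrite ex' dotDr !dotZr.
rewrite /PsiF eh.
have F2' : (1 - bt) * (f xh + bt * (dot g x - dot g b)) <= (1 - bt) * f x.
  by rewrite ler_wpM2l // subr_ge0.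
have F3' : bt * (f xh + (dot g xx - bt * dot g b - (1 - bt) * dot g x)) <= bt * f xx.
  by rewrite ler_wpM2l // ltW.
have F4' := F4; move: F4' => /(ler_wpM2l (ltW bt0)) F4'.
have F5' := F5; move: F5' => /(ler_wpM2l (ltW bt0)) F5'.
clear F2 F3 F4 F5.
rewrite dotBr; lra.
Qed.

End Step.

Section Coef.
Variable R : realType.

Lemma coef_c (T eta nu : R) : 1 <= T -> 0 < eta -> 0 < nu -> eta * nu < 1 ->
  let c := 2 / (T * eta) - nu * (2 / (T + 1)) in
  0 < c /\ T / (2 * c) <= eta / (4 * (1 - eta * nu)) * T ^+ 2.
Proof.
move=> T1 e0 n0 en c.
have T0 : 0 < T by lra.
have Tp : 0 < T + 1 by lra.
have D0 : 0 < T + 1 - nu * eta * T by nra.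
have ec : c = 2 * (T + 1 - nu * eta * T) / (T * eta * (T + 1)).
  rewrite /c; field; rewrite ?gt_eqF //; lra.
have c0 : 0 < c by rewrite ec divr_gt0 ?mulr_gt0.
split => //.
have -> : T / (2 * c) = T ^+ 2 * eta * (T + 1) / (4 * (T + 1 - nu * eta * T)).
  rewrite ec; field; rewrite ?gt_eqF //; lra.
have E0 : 0 < 1 - eta * nu by lra.
rewrite ler_pdivrMr ?mulr_gt0 //.
have -> : eta / (4 * (1 - eta * nu)) * T ^+ 2 * (4 * (T + 1 - nu * eta * T))
   = T ^+ 2 * eta * ((T + 1 - nu * eta * T) / (1 - eta * nu)).
  field; rewrite ?gt_eqF //; lra.
rewrite ler_pM2l ?mulr_gt0 ?exprn_gt0 //.
rewrite ler_pdivlMr //; nra.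
Qed.

Lemma coef_bt (T : R) : 1 <= T -> 0 < 2 / (T + 1) <= 1.
Proof.
move=> T1; apply/andP; split; first by rewrite divr_gt0 //; lra.
by rewrite ler_pdivrMr; lra.
Qed.

End Coef.

Section Inner.
Variable R : realType.

Lemma inner_mem n (X : set 'cV[R]_n) (cX : Defs.convex_set X) (xin xbin : nat -> 'cV[R]_n)
  (obj : nat -> 'cV[R]_n -> R) (bt : nat -> R) m :
  X (xin 1%N) -> X (xbin 1%N) ->
  (forall t, (1 <= t <= m)%N -> 0 <= bt t <= 1) ->
  (forall t, (1 <= t <= m)%N -> is_argmin X (obj t) (xbin t.+1)
     /\ xin t.+1 = bt t *: xbin t.+1 + (1 - bt t) *: xin t) ->
  forall t, (1 <= t <= m.+1)%N -> X (xin t) /\ X (xbin t).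
Proof.
move=> X1 Xb1 hbt hin; elim => [//|t IH] /andP[ht1 htm].
case: t IH ht1 htm => [|t] IH _ htm; first by [].
have ht : (1 <= t.+1 <= m)%N by rewrite ltn0Sn.
have ht2 : (0 < t.+1 <= m.+1)%N by rewrite ltn0Sn (ltnW htm).
have [Xx Xb] := IH ht2.
have [[Xb' _] ex'] := hin _ ht.
split => //; rewrite ex'; exact: cX (hbt _ ht).
Qed.

Lemma inner n (X : set 'cV[R]_n) (cX : Defs.convex_set X) (f : 'cV[R]_n -> R) gF
  (H Hi M : 'M[R]_n) (nu eta : R) (h xk : 'cV[R]_n)
  (xin xbin d del : nat -> 'cV[R]_n) (m : nat) (xx : 'cV[R]_n) :
  (forall a u, X a -> X u -> f a + dot (gF a) (u - a) <= f u) ->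
  (forall a u, X a -> X u -> f u <= f a + dot (gF a) (u - a) + nu / 2 * sqnorm H (u - a)) ->
  (forall u v (c : R), 0 < c -> dot u v <= sqnorm Hi u / (2 * c) + c / 2 * sqnorm H v) ->
  (forall u, 0 <= sqnorm Hi u) ->
  psd M -> 0 < nu -> 0 < eta -> eta * nu < 1 ->
  X (xin 1%N) -> X (xbin 1%N) -> X xx ->
  (forall t, (1 <= t <= m)%N ->
     is_argmin X (fun u => dot (d t + h) u + 2 / (t%:R * eta) / 2 * sqnorm H (u - xbin t)
                          + 1 / 2 * sqnorm M (u - xk)) (xbin t.+1)
     /\ xin t.+1 = (2 / (t%:R + 1)) *: xbin t.+1 + (1 - 2 / (t%:R + 1)) *: xin t) ->
  (forall t, del t = gF ((2 / (t%:R + 1)) *: xbin t + (1 - 2 / (t%:R + 1)) *: xin t) - d t) ->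
  forall t, (t <= m)%N ->
  t%:R * (t%:R + 1) / 2 * (PsiF f h M xk (xin t.+1) - PsiF f h M xk xx
                           + 1 / 2 * sqnorm M (xx - xin t.+1))
  <= \sum_(1 <= i < t.+1) i%:R * dot (del i) (xbin i - xx)
     + eta / (4 * (1 - eta * nu)) * \sum_(1 <= i < t.+1) (i%:R ^+ 2 * sqnorm Hi (del i))
     + eta^-1 * (sqnorm H (xx - xbin 1%N) - sqnorm H (xx - xbin t.+1)).
Proof.
move=> hgrad hdesc hyoung hQ hM nu0 eta0 en X1 Xb1 Xxx hin hdel.
have hbt : forall t, (1 <= t <= m)%N -> 0 <= (2 / (t%:R + 1) : R) <= 1.
  move=> t /andP[t1 _]; have := @coef_bt R t%:R.
  rewrite ler1n t1 => /(_ isT) /andP[a b']; by rewrite ltW.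
have hmem := inner_mem cX X1 Xb1 hbt hin.
elim => [_|t IH htm].
  by rewrite !big_geq // !mul0r subrr !mulr0 !addr0.
have ht : (1 <= t.+1 <= m)%N by rewrite ltn0Sn.
have [Xx Xb] := hmem t.+1 (leqW ht).
have [hmin ex'] := hin _ ht.
have T1 : 1 <= t.+1%:R :> R by rewrite ler1n.
have [c0 cb] := coef_c T1 eta0 nu0 en.
have hbt' := coef_bt T1.
have S := step cX hgrad hdesc hyoung hM hbt' c0 Xb Xx Xxx hmin ex'.
rewrite -hdel in S.
have IH' := IH (ltnW htm).
rewrite big_nat_recr //= [X in _ <= _ + _ * X + _]big_nat_recr //=.
set T := t.+1%:R : R.
set bt := 2 / (T + 1).
set gt := 2 / (T * eta).
set P' := _ - _ + _ in S.
set P := (PsiF f h M xk (xin t.+1) - PsiF f h M xk xx + 1 / 2 * sqnorm M (xx - xin t.+1)) in S IH'.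
set D := dot (del t.+1) (xbin t.+1 - xx) in S *.
set Q := sqnorm Hi (del t.+1) in S *.
set Hb := sqnorm H (xx - xbin t.+1) in S IH' *.
set Hb' := sqnorm H (xx - xbin t.+2) in S *.
set c := gt - nu * bt in S cb c0.
have Tt : T = t%:R + 1 by rewrite /T -natr1.
have Tp : 0 < T by rewrite /T ltr0n.
have aP : 0 <= T * (T + 1) / 2 by rewrite divr_ge0 // mulr_ge0 // ?ltW //; lra.
have S' := ler_wpM2l aP S.
have e1 : T * (T + 1) / 2 * (1 - bt) = t%:R * (t%:R + 1) / 2.
  rewrite /bt Tt; field; rewrite ?gt_eqF //; lra.
have e2 : T * (T + 1) / 2 * bt = T.
  rewrite /bt; field; rewrite ?gt_eqF //; lra.
have e3 : T * gt / 2 = eta^-1.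
  rewrite /gt; field; rewrite ?gt_eqF //; lra.
have hQ' : 0 <= Q := hQ _.
have cb' : T * (Q / (2 * c)) <= eta / (4 * (1 - eta * nu)) * (T ^+ 2 * Q).
  have -> : T * (Q / (2 * c)) = T / (2 * c) * Q by rewrite mulrA mulrAC.
  by rewrite mulrA ler_wpM2r.
have : T * (T + 1) / 2 * ((1 - bt) * P + bt * (D + Q / (2 * c) + gt / 2 * (Hb - Hb')))
   = t%:R * (t%:R + 1) / 2 * P + T * D + T * (Q / (2 * c)) + eta^-1 * (Hb - Hb').
  rewrite /gt /bt Tt; field; rewrite ?gt_eqF //; lra.
move=> E; rewrite E in S'.
rewrite -/P'.
lra.
Qed.

End Inner.

Section Ext.
Variable R : realType.

Lemma small_pos2 (L K : R) :
  (forall e : R, 0 < e < 1 -> 0 <= e * L + e ^+ 2 * K) -> 0 <= L.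
Proof.
move=> h; apply: (@small_pos _ L (K / 2)) => e /andP[e0 e1].
have := h (e / 2); rewrite divr_gt0 //=; have -> : e / 2 < 1 by lra.
move=> /(_ isT) H.
have -> : e * L + e ^+ 2 * (K / 2) = 2 * (e / 2 * L + (e / 2) ^+ 2 * K).
  by rewrite !expr2; field.
by rewrite mulr_ge0.
Qed.

Lemma ypart n (Y : set 'cV[R]_n) (cY : Defs.convex_set Y) (g : 'cV[R]_n -> \bar R)
  (hg : proper_closed_convex Y g) (q : 'cV[R]_n -> R) (y1 : 'cV[R]_n) :
  is_argmin_e Y (fun v => (g v + (q v)%:E)%E) y1 ->
  g y1 \is a fin_num /\
  forall yy (L K : R), Y yy ->
    (forall e : R, 0 < e < 1 -> q (e *: yy + (1 - e) *: y1) = q y1 + e * L + e ^+ 2 * K) ->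
    ((fine (g y1) - L)%:E <= g yy)%E.
Proof.
move=> [Y1 hmin]; case: hg => hninf [u0 [Yu0 fu0]] _ hconv.
have fy1 : g y1 \is a fin_num.
  rewrite fin_numE hninf //=; apply/negP => /eqP E.
  have := hmin _ Yu0; rewrite E -(fineK fu0) addye //= -EFinD leye_eq.
split => // yy L K Yy hq.
case Egy : (g yy) => [gy| |]; last 2 first.
- by rewrite leey.
- by move: (hninf _ Yy); rewrite Egy.
rewrite lee_fin.
set G1 := fine (g y1).
have eG1 : g y1 = G1%:E by rewrite /G1 fineK.
suff : 0 <= gy - G1 + L by lra.
apply: (@small_pos2 _ K) => e /andP[e0 e1].
set ye := e *: yy + (1 - e) *: y1.
have Yye : Y ye by apply: cY => //; rewrite !ltW.
have hc := hconv _ _ e Yy Y1; rewrite e0 e1 /= in hc; move: (hc isT) => {hc} hc.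
rewrite Egy eG1 -!EFinM -EFinD in hc.
have hm := hmin _ Yye.
rewrite /= in hm.
have fye : g ye \is a fin_num.
  rewrite fin_numE hninf //=.
  by move: hc; case: (g ye).
rewrite -(fineK fye) eG1 -!EFinD lee_fin in hm.
rewrite -(fineK fye) lee_fin in hc.
rewrite hq in hm; last by rewrite e0 e1.
rewrite /ye in hm hc.
have : G1 + q y1 <= e * gy + (1 - e) * G1 + (q y1 + e * L + e ^+ 2 * K) by lra.
move=> hh.
have -> : e * (gy - G1 + L) + e ^+ 2 * K
   = (e * gy + (1 - e) * G1 + (q y1 + e * L + e ^+ 2 * K)) - (G1 + q y1) by ring.
lra.
Qed.

End Ext.

Section YBlock.
Variable R : realType.

Lemma mxE_add m n (A B : 'M[R]_(m, n)) i j : (A + B) i j = A i j + B i j.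
Proof. by rewrite mxE. Qed.
Lemma mxE_opp m n (A : 'M[R]_(m, n)) i j : (- A) i j = - A i j.
Proof. by rewrite mxE. Qed.
Lemma mxE_scale m n k (A : 'M[R]_(m, n)) i j : (k *: A) i j = k * A i j.
Proof. by rewrite mxE. Qed.

Lemma dot_sq n (u a : 'cV[R]_n) (e : R) :
  dot (u + e *: a) (u + e *: a) = dot u u + e * (dot u a + dot a u) + e ^+ 2 * dot a a.
Proof. by rewrite !dot_bf -!sqnorm_bf sqnorm_shift. Qed.

Lemma comb_shift n (yy y1 : 'cV[R]_n) (e : R) :
  e *: yy + (1 - e) *: y1 = y1 + e *: (yy - y1).
Proof. by rewrite scalerBr scalerBl scale1r addrCA. Qed.

Lemma yblock n n2 (Y : set 'cV[R]_n2) (cY : Defs.convex_set Y) (g : 'cV[R]_n2 -> \bar R)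
  (hg : proper_closed_convex Y g) (B : 'M[R]_(n, n2)) (L1 : 'M[R]_n2) (hL1 : symmx L1)
  (beta tau : R) (P lam lamt lamh s0 : 'cV[R]_n) (yk y1 : 'cV[R]_n2)
  (q : 'cV[R]_n2 -> R) :
  0 < beta ->
  lamh = lam - (tau * beta) *: s0 ->
  lamt = lam - beta *: s0 ->
  P = s0 - B *m yk - beta^-1 *: lamh ->
  is_argmin_e Y (fun v => (g v + (q v)%:E)%E) y1 ->
  (forall v, q v = beta / 2 * dot (P + B *m v) (P + B *m v) + 1 / 2 * sqnorm L1 (v - yk)) ->
  g y1 \is a fin_num /\
  forall yy, Y yy ->
  ((fine (g y1) + bf L1 (yy - y1) (yk - y1) + beta * dot (B *m (yy - y1)) (B *m (yk - y1))
     - tau * dot (B *m (yy - y1)) (lam - lamt) - dot (yy - y1) (- (B^T *m lamt)))%:E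
   <= g yy)%E.
Proof.
move=> b0 elh elt eP hmin hq.
have [fy1 H] := ypart cY hg hmin.
split => // yy Yy.
set w := yy - y1.
set u := P + B *m y1.
set L := beta / 2 * (dot u (B *m w) + dot (B *m w) u)
         + 1 / 2 * (bf L1 (y1 - yk) w + bf L1 w (y1 - yk)).
set K := beta / 2 * dot (B *m w) (B *m w) + 1 / 2 * sqnorm L1 w.
have hq' : forall e : R, 0 < e < 1 ->
    q (e *: yy + (1 - e) *: y1) = q y1 + e * L + e ^+ 2 * K.
  move=> e _; rewrite !hq comb_shift -/w mulmxDr -scalemxAr addrA -/u dot_sq.
  have -> : y1 + e *: w - yk = (y1 - yk) + e *: w by rewrite addrAC.
  rewrite sqnorm_shift /L /K; ring.
have H1 := H yy L K Yy hq'.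
apply: le_trans H1; rewrite lee_fin.
have V : - beta *: u - lamt = beta *: (B *m (yk - y1)) - tau *: (lam - lamt).
  rewrite /u eP elt elh mulmxBr; apply/matrixP => i j.
  rewrite !(mxE_add, mxE_opp, mxE_scale); field; rewrite gt_eqF //.
have D1 : dot (B *m w) (- beta *: u - lamt)
        = dot (B *m w) (beta *: (B *m (yk - y1)) - tau *: (lam - lamt)) by rewrite V.
rewrite dotBr dotZr dotBr !dotZr in D1.
have S1 : bf L1 (y1 - yk) w = bf L1 w (y1 - yk) by rewrite bfC.
have S2 : y1 - yk = - (yk - y1) by rewrite opprB.
rewrite /L S1 S2 bfNr dotNr -dot_mull (dotC u (B *m w)) -/w.
lra.
Qed.

End YBlock.

Section Spd.
Variable R : realType.

Lemma spd_unit n (H : 'M[R]_n) : spd H -> H \in unitmx.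
Proof.
move=> [hs hp]; apply/negPn/negP => hn.
have : kermx H != 0 by rewrite kermx_eq0 row_free_unit.
move=> /rowV0Pn [v vK v0].
have vH : v *m H = 0 by apply/eqP; rewrite -sub_kermx.
have c0 : v^T != 0 by rewrite -trmx0 (inj_eq trmx_inj).
have := hp _ c0; rewrite /sqnorm trmxK.
have -> : v *m H = 0 := vH.
by rewrite mul0mx mxE ltxx.
Qed.

Lemma sqnorm_inv n (H : 'M[R]_n) u : spd H ->
  sqnorm (invmx H) u = sqnorm H (invmx H *m u) /\
  forall v, dot u v = bf H (invmx H *m u) v.
Proof.
move=> hH; have hu := spd_unit hH; have hs := hH.1.
have hiT : (invmx H)^T = invmx H by rewrite trmx_inv hs.
split.
  rewrite /sqnorm trmx_mul hiT -!mulmxA (mulmxA H) mulmxV // mul1mx.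
  by rewrite !mulmxA.
move=> v; rewrite /bf /dot trmx_mul hiT -!mulmxA (mulmxA (invmx H)) mulVmx // mul1mx.
by [].
Qed.

Lemma sqnorm_ge0_spd n (H : 'M[R]_n) v : spd H -> 0 <= sqnorm H v.
Proof.
move=> [_ hp]; case: (eqVneq v 0) => [->|v0].
  by rewrite /sqnorm mulmx0 mxE.
exact/ltW/hp.
Qed.

Lemma young_spd n (H : 'M[R]_n) : spd H ->
  (forall u v (c : R), 0 < c ->
     dot u v <= sqnorm (invmx H) u / (2 * c) + c / 2 * sqnorm H v) /\
  (forall u, 0 <= sqnorm (invmx H) u).
Proof.
move=> hH; split; last first.
  by move=> u; rewrite (sqnorm_inv u hH).1 sqnorm_ge0_spd.
move=> u v c c0.
have [E1 E2] := sqnorm_inv u hH.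
set p := invmx H *m u in E1 E2.
have h0 := sqnorm_ge0_spd (p - c *: v) hH.
rewrite sqnorm_bf !bfDl !bfDr ?bfNl ?bfNr !bfZl !bfZr in h0.
rewrite (bfC v p hH.1) -(E2 v) in h0.
rewrite E1 !sqnorm_bf.
have -> : bf H p p / (2 * c) + c / 2 * bf H v v
   = (bf H p p + c ^+ 2 * bf H v v) / (2 * c) by field; rewrite gt_eqF.
rewrite ler_pdivlMr ?mulr_gt0 //.
nra.
Qed.

Lemma psd_sub_AtA n m (M : 'M[R]_n) (A : 'M[R]_(m, n)) (beta : R) :
  0 < beta -> psd (M - beta *: (A^T *m A)) -> psd M.
Proof.
move=> b0 hp v.
have := hp v.
have -> : sqnorm (M - beta *: (A^T *m A)) v = sqnorm M v - beta * dot (A *m v) (A *m v).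
  rewrite /sqnorm /dot mulmxBr mulmxBl mxE_add mxE_opp -scalemxAr -scalemxAl mxE_scale.
  by rewrite trmx_mul !mulmxA.
have : 0 <= dot (A *m v) (A *m v).
  rewrite /dot mxE; apply: sumr_ge0 => i _; rewrite mxE -expr2; exact: sqr_ge0.
nra.
Qed.

End Spd.

Section Avg.
Variable R : realType.

Lemma dot0l n (w : 'cV[R]_n) : dot 0 w = 0.
Proof. by rewrite dot_bf bf0l. Qed.

Lemma dot_sum n N (F : 'I_N -> 'cV[R]_n) w :
  dot (\sum_(j < N) F j) w = \sum_(j < N) dot (F j) w.
Proof.
elim/big_rec2: _ => [|j y1 y2 _ <-]; first exact: dot0l.
by rewrite dotDl.
Qed.

Lemma lip_mono n (H : 'M[R]_n) (nu : R) (g1 g2 x1 x2 : 'cV[R]_n) : spd H -> 0 < nu ->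
  Num.sqrt (sqnorm (invmx H) (g1 - g2)) <= nu * Num.sqrt (sqnorm H (x1 - x2)) ->
  dot (g1 - g2) (x1 - x2) <= nu * sqnorm H (x1 - x2).
Proof.
move=> hH n0 hl.
have [hy hQ] := young_spd hH.
set a := sqnorm (invmx H) (g1 - g2) in hl *.
set b := sqnorm H (x1 - x2) in hl *.
have a0 : 0 <= a := hQ _.
have b0 : 0 <= b := sqnorm_ge0_spd _ hH.
have ha := sqr_sqrtr a0; have hb := sqr_sqrtr b0.
have s1 := sqrtr_ge0 a; have s2 := sqrtr_ge0 b.
have ab : a <= nu ^+ 2 * b.
  rewrite -ha -hb; rewrite !expr2.
  have := ler_pM s1 s1 hl hl; nra.
have := hy (g1 - g2) (x1 - x2) nu n0; rewrite -/a -/b.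
have : a / (2 * nu) <= nu ^+ 2 * b / (2 * nu) by rewrite ler_pM2r // invr_gt0 mulr_gt0.
have -> : nu ^+ 2 * b / (2 * nu) = nu / 2 * b by field; rewrite gt_eqF.
lra.
Qed.

Lemma avg_grad n N (X : set 'cV[R]_n) (fj : 'I_N -> 'cV[R]_n -> R) gradf :
  (forall j a u, X a -> X u -> fj j a + dot (gradf j a) (u - a) <= fj j u) ->
  forall a u, X a -> X u ->
  N%:R^-1 * \sum_(j < N) fj j a + dot (N%:R^-1 *: \sum_(j < N) gradf j a) (u - a)
  <= N%:R^-1 * \sum_(j < N) fj j u.
Proof.
move=> h a u Xa Xu.
rewrite dotZl dot_sum -mulrDr -big_split /=.
by rewrite ler_wpM2l ?invr_ge0 // ler_sum // => j _; apply: h.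
Qed.

Lemma avg_desc n N (X : set 'cV[R]_n) (fj : 'I_N -> 'cV[R]_n -> R) gradf (H : 'M[R]_n) nu :
  (0 < N)%N ->
  (forall j a u, X a -> X u ->
     fj j u <= fj j a + dot (gradf j a) (u - a) + nu / 2 * sqnorm H (u - a)) ->
  forall a u, X a -> X u ->
  N%:R^-1 * \sum_(j < N) fj j u <=
  N%:R^-1 * \sum_(j < N) fj j a + dot (N%:R^-1 *: \sum_(j < N) gradf j a) (u - a)
   + nu / 2 * sqnorm H (u - a).
Proof.
move=> N0 h a u Xa Xu.
rewrite dotZl dot_sum -mulrDr.
have hN : 0 < N%:R :> R by rewrite ltr0n.
have -> : nu / 2 * sqnorm H (u - a) = N%:R^-1 * \sum_(j < N) (nu / 2 * sqnorm H (u - a)).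
  by rewrite sumr_const card_ord -mulr_natr; field; rewrite gt_eqF.
rewrite -mulrDr -!big_split /=.
rewrite ler_wpM2l ?invr_ge0 ?ler0n //.
by apply: ler_sum => j _; apply: h.
Qed.

End Avg.

Section Blocks.
Variable R : realType.

Lemma wvecB n1 n2 n3 n (a a' : 'cV[R]_n1) (b b' : 'cV[R]_n2) (c c' : 'cV[R]_n3) (d d' : 'cV[R]_n) :
  wvec a b c d - wvec a' b' c' d' = wvec (a - a') (b - b') (c - c') (d - d').
Proof. by rewrite /wvec !opp_col_mx !add_col_mx. Qed.

Lemma dot_wvec n1 n2 n3 n (a a' : 'cV[R]_n1) (b b' : 'cV[R]_n2) (c c' : 'cV[R]_n3) (d d' : 'cV[R]_n) :
  dot (wvec a b c d) (wvec a' b' c' d') = dot a a' + dot b b' + dot c c' + dot d d'.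
Proof.
by rewrite /dot /wvec !tr_col_mx !mul_row_col !mxE_add !addrA.
Qed.

Lemma quad_expand n n1 n2 n3 (D : 'M[R]_n1) L1 L2 (B : 'M[R]_(n, n2)) (C : 'M[R]_(n, n3)) beta tau
  dx dy dz dl ex ey ez el :
  ((wvec dx dy dz dl)^T *m Qmat D L1 L2 B C beta tau *m wvec ex ey ez el) 0 0 =
  bf D dx ex + bf L1 dy ey + beta * dot (B *m dy) (B *m ey) - dot dl (B *m ey)
  + bf L2 dz ez + beta * dot (C *m dz) (C *m ez) - dot dl (C *m ez)
  - tau * dot (B *m dy) el - tau * dot (C *m dz) el + beta^-1 * dot dl el.
Proof.
rewrite /wvec /Qmat.
do 4 rewrite ?tr_col_mx ?tr_row_mx ?mul_row_block ?mul_row_col ?mulmx0 ?mul0mx ?addr0 ?add0r.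
rewrite ?mul_mx_row ?add_row_mx ?mul_row_col ?mulmx0 ?addr0 ?add0r.
rewrite ?mul_mx_scalar.
do 3 rewrite ?mulmxDl ?mulmxDr ?mulmxN ?mulNmx ?mxE_add ?mxE_opp -?scalemxAl -?scalemxAr ?mxE_scale ?mulmxA.
rewrite /bf /dot !trmx_mul !mulmxA; ring.
Qed.

Lemma jskew n n1 n2 n3 (A : 'M[R]_(n, n1)) (B : 'M[R]_(n, n2)) (C : 'M[R]_(n, n3)) (b : 'cV[R]_n)
  x0 y0 z0 l0 dx dy dz dl :
  dot dx (- A^T *m (l0 + dl)) + dot dy (- B^T *m (l0 + dl)) + dot dz (- C^T *m (l0 + dl))
  + dot dl (A *m (x0 + dx) + B *m (y0 + dy) + C *m (z0 + dz) - b)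
  = dot dx (- (A^T *m l0)) + dot dy (- (B^T *m l0)) + dot dz (- (C^T *m l0))
  + dot dl (A *m x0 + B *m y0 + C *m z0 - b).
Proof.
rewrite !mulNmx !mulmxDr !dotNr !dotDr ?dotNr -!dot_mull.
rewrite (dotC (A *m dx) dl) (dotC (B *m dy) dl) (dotC (C *m dz) dl); ring.
Qed.

Lemma bf_sub_AtA n n1 (M : 'M[R]_n1) (A : 'M[R]_(n, n1)) (beta : R) u v :
  bf (M - beta *: (A^T *m A)) u v = bf M u v - beta * dot (A *m u) (A *m v).
Proof.
rewrite /bf /dot mulmxBr mulmxBl mxE_add mxE_opp -scalemxAr -scalemxAl mxE_scale.
by rewrite trmx_mul !mulmxA.
Qed.

Lemma xblock n n1 (f : 'cV[R]_n1 -> R) (A : 'M[R]_(n, n1)) (M : 'M[R]_n1) (hM : symmx M)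
  (beta : R) (h xk x1 xx : 'cV[R]_n1) (lamt : 'cV[R]_n) (z : R) :
  - (A^T *m lamt) = h + beta *: (A^T *m (A *m (x1 - xk))) ->
  z + 1 / 2 * sqnorm M (xx - x1) <= PsiF f h M xk xx - PsiF f h M xk x1 ->
  bf (M - beta *: (A^T *m A)) (xx - x1) (xk - x1) + z
  <= f xx - f x1 + dot (xx - x1) (- (A^T *m lamt)).
Proof.
move=> eA hP.
rewrite eA dotDr dotZr -dot_mull bf_sub_AtA.
have e1 : x1 - xk = - (xk - x1) by rewrite opprB.
rewrite e1 mulmxN dotNr.
move: hP; rewrite /PsiF.
have e2 : xx - xk = (xx - x1) - (xk - x1).
  by apply/matrixP => i j; rewrite !(mxE_add, mxE_opp); ring.
have e3 : dot h xx - dot h x1 = dot (xx - x1) h by rewrite dotBl (dotC xx) (dotC x1).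
rewrite e2 e1.
move: e3; generalize (xx - x1) (xk - x1) => dx ex e3.
rewrite !sqnorm_bf !bfDl !bfDr ?bfNl ?bfNr ?opprK.
rewrite (bfC ex dx hM).
lra.
Qed.

End Blocks.

Unset Implicit Arguments.
Set Strict Implicit.
Set Printing Implicit Defensive.

Theorem theorem4p5
  (R : realType) (n n1 n2 n3 N : nat) (HN : (0 < N)%N)
  (X : set 'cV[R]_n1) (Y : set 'cV[R]_n2) (Z : set 'cV[R]_n3)
  (hX : ncc_set X) (hY : ncc_set Y) (hZ : ncc_set Z)
  (A : 'M[R]_(n, n1)) (B : 'M[R]_(n, n2)) (C : 'M[R]_(n, n3)) (b : 'cV[R]_n)
  (g : 'cV[R]_n2 -> \bar R) (l : 'cV[R]_n3 -> \bar R)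
  (hg : proper_closed_convex Y g) (hl : proper_closed_convex Z l)
  (fj : 'I_N -> 'cV[R]_n1 -> R) (gradf : 'I_N -> 'cV[R]_n1 -> 'cV[R]_n1)
  (U : 'I_N -> set 'cV[R]_n1)
  (hf : forall j, [/\ X `<=` U j, convex_fun_on X (fj j)
                    & C1_with_grad (U j) (fj j) (gradf j)])
  (H : 'M[R]_n1) (nu : R) (hH : spd H) (hnu : 0 < nu)
  (hLip : forall j x1 x2, X x1 -> X x2 ->
     Num.sqrt (sqnorm (invmx H) (gradf j x1 - gradf j x2))
       <= nu * Num.sqrt (sqnorm H (x1 - x2)))
  (beta tau s : R) (hbeta : 0 < beta) (hts : Delta tau s)
  (L1 : 'M[R]_n2) (L2 : 'M[R]_n3) (hL1 : symmx L1) (hL2 : symmx L2)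
  (* outer iterates *)
  (x : nat -> 'cV[R]_n1) (y : nat -> 'cV[R]_n2) (z : nat -> 'cV[R]_n3)
  (lam : nat -> 'cV[R]_n) (xb : nat -> 'cV[R]_n1) (lamh : nat -> 'cV[R]_n)
  (m : nat -> nat) (eta : nat -> R) (M : nat -> 'M[R]_n1)
  (* inner quantities of xsub at outer iteration k, inner step t *)
  (xin xbin : nat -> nat -> 'cV[R]_n1) (xi : nat -> nat -> 'I_N)
  (e : nat -> nat -> 'cV[R]_n1)
  (h0 : [/\ X (x 0%N), Y (y 0%N) & Z (z 0%N)]) (hxb0 : xb 0%N = x 0%N)
  (hparam : forall k, [/\ (1 <= m k)%N, 0 < eta k, symmx (M k)
                        & psd (M k - beta *: (A^T *m A))])
  (hinit : forall k, xin k 1%N = x k /\ xbin k 1%N = xb k)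
  (hinner : forall k t, (1 <= t <= m k)%N ->
     let bt : R := 2 / (t%:R + 1) in
     let gt : R := 2 / (t%:R * eta k) in
     let hk := - A^T *m (lam k - beta *: (A *m x k + B *m y k + C *m z k - b)) in
     let xhat := bt *: xbin k t + (1 - bt) *: xin k t in
     let d := gradf (xi k t) xhat + e k t in
     is_argmin X (fun u => dot (d + hk) u + gt / 2 * sqnorm H (u - xbin k t)
                           + 1 / 2 * sqnorm (M k) (u - x k)) (xbin k t.+1)
     /\ xin k t.+1 = bt *: xbin k t.+1 + (1 - bt) *: xin k t)
  (hout : forall k, x k.+1 = xin k (m k).+1 /\ xb k.+1 = xbin k (m k).+1)
  (hlamh : forall k,
     lamh k = lam k - (tau * beta) *: (A *m x k.+1 + B *m y k + C *m z k - b))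
  (hy : forall k, is_argmin_e Y
     (fun v => (g v + (beta / 2 * dot (A *m x k.+1 + B *m v + C *m z k - b - beta^-1 *: lamh k)
                                      (A *m x k.+1 + B *m v + C *m z k - b - beta^-1 *: lamh k)
                       + 1 / 2 * sqnorm L1 (v - y k))%:E)%E) (y k.+1))
  (hz : forall k, is_argmin_e Z
     (fun v => (l v + (beta / 2 * dot (A *m x k.+1 + B *m y k + C *m v - b - beta^-1 *: lamh k)
                                      (A *m x k.+1 + B *m y k + C *m v - b - beta^-1 *: lamh k)
                       + 1 / 2 * sqnorm L2 (v - z k))%:E)%E) (z k.+1))
  (hlam : forall k,
     lam k.+1 = lamh k - (s * beta) *: (A *m x k.+1 + B *m y k.+1 + C *m z k.+1 - b)) :
  forall k : nat, 0 < eta k < nu^-1 ->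
  let f := fun u => N%:R^-1 * \sum_(j < N) fj j u in
  let gradF := fun u => N%:R^-1 *: \sum_(j < N) gradf j u in
  let delta := fun t : nat =>
     let bt : R := 2 / (t%:R + 1) in
     let xhat := bt *: xbin k t + (1 - bt) *: xin k t in
     gradF xhat - (gradf (xi k t) xhat + e k t) in
  let lamt := lam k - beta *: (A *m x k.+1 + B *m y k + C *m z k - b) in
  let Fw := fun x' y' z' => ((f x')%:E + g y' + l z')%E in
  forall (xx : 'cV[R]_n1) (yy : 'cV[R]_n2) (zz : 'cV[R]_n3) (ll : 'cV[R]_n),
  X xx -> Y yy -> Z zz ->
  (Fw xx yy zz - Fw (x k.+1) (y k.+1) (z k.+1)
     + (dot (wvec xx yy zz ll - wvec (x k.+1) (y k.+1) (z k.+1) lamt)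
            (Jop A B C b xx yy zz ll))%:E
   >= (((wvec xx yy zz ll - wvec (x k.+1) (y k.+1) (z k.+1) lamt)^T
         *m Qmat (M k - beta *: (A^T *m A)) L1 L2 B C beta tau
         *m (wvec (x k) (y k) (z k) (lam k) - wvec (x k.+1) (y k.+1) (z k.+1) lamt)) 0 0)%R
      %:E
      + (zeta H nu (eta k) (m k) (xb k) (xb k.+1) delta (xbin k) xx)%:E)%E.

Proof.
move=> k /andP[ek0 ek1] f gradF delta lamt Fw xx yy zz ll Xxx Yyy Zzz.
have cX : Defs.convex_set X by case: hX => _ [].
have cY : Defs.convex_set Y by case: hY => _ [].
have cZ : Defs.convex_set Z by case: hZ => _ [].
have hgj : forall j a u, X a -> X u -> fj j a + dot (gradf j a) (u - a) <= fj j u.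
  by move=> j; have [XU cj C1] := hf j; exact: grad_ineq cX XU cj C1.
have hdj : forall j a u, X a -> X u ->
    fj j u <= fj j a + dot (gradf j a) (u - a) + nu / 2 * sqnorm H (u - a).
  move=> j; have [XU cj C1] := hf j; apply: (descent cX XU C1) => x1 x2 X1 X2.
  exact: lip_mono hH hnu (hLip j x1 x2 X1 X2).
have hgF := avg_grad hgj.
have hdF := avg_desc HN hdj.
have [hyo hQ] := young_spd hH.
have hbt : forall t : nat, (1 <= t)%N -> 0 <= (2 / (t%:R + 1) : R) <= 1.
  move=> t t1; have := @coef_bt R t%:R.
  rewrite ler1n t1 => /(_ isT) /andP[a b']; by rewrite ltW.
have mem : forall k', X (x k') /\ X (xb k').
  elim => [|k' [Xk Xbk]]; first by case: h0 => ? _ _; rewrite hxb0.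
  have [m1 _ _ _] := hparam k'; have [e1 e2] := hinit k'.
  have X1 : X (xin k' 1%N) by rewrite e1.
  have Xb1 : X (xbin k' 1%N) by rewrite e2.
  have hbt' : forall t, (1 <= t <= m k')%N -> 0 <= (2 / (t%:R + 1) : R) <= 1.
    by move=> t /andP[t1 _]; apply: hbt.
  have HM := inner_mem cX X1 Xb1 hbt' (fun t ht => hinner k' t ht).
  have := HM (m k').+1; rewrite ltn0Sn leqnn.
  by case: (hout k') => <- <-; apply.
have [m1 eta0 symM psdD] := hparam k.
have hMpsd : psd (M k) := psd_sub_AtA hbeta psdD.
have en : eta k * nu < 1.
  by move: ek1; rewrite -div1r ltr_pdivlMr.
have [Xk Xbk] := mem k.
have [e1 e2] := hinit k.
have X1 : X (xin k 1%N) by rewrite e1.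
have Xb1 : X (xbin k 1%N) by rewrite e2.
have IN := inner cX hgF hdF hyo hQ hMpsd hnu eta0 en X1 Xb1 Xxx
   (fun t ht => hinner k t ht) (fun t => erefl) (leqnn (m k)).
case: (hout k) => ex1 exb1.
rewrite -ex1 -exb1 e2 in IN.
set hk := (- A^T *m (lam k - beta *: (A *m x k + B *m y k + C *m z k - b))) in IN.
pose cc := eta k / (4 * (1 - eta k * nu)).
pose S1 := \sum_(1 <= t < (m k).+1) t%:R * dot (delta t) (xbin k t - xx).
pose S2 := \sum_(1 <= t < (m k).+1) (t%:R ^+ 2 * sqnorm (invmx H) (delta t)).
pose a : R := (m k)%:R * ((m k)%:R + 1) / 2.
pose RHS := S1 + cc * S2 + (eta k)^-1 * (sqnorm H (xx - xb k) - sqnorm H (xx - xb k.+1)).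
pose P := PsiF f hk (M k) (x k) (x k.+1) - PsiF f hk (M k) (x k) xx
         + 1 / 2 * sqnorm (M k) (xx - x k.+1).
have IN' : a * P <= RHS := IN.
have hzeta : zeta H nu (eta k) (m k) (xb k) (xb k.+1) delta (xbin k) xx
          + 1 / 2 * sqnorm (M k) (xx - x k.+1)
          <= PsiF f hk (M k) (x k) xx - PsiF f hk (M k) (x k) (x k.+1).
  have mk0 : 0 < (m k)%:R :> R by rewrite ltr0n.
  have a0 : 0 < a by rewrite /a divr_gt0 // mulr_gt0 //; lra.
  have hP : P <= RHS / a by rewrite ler_pdivlMr // mulrC.
  have Ez : zeta H nu (eta k) (m k) (xb k) (xb k.+1) delta (xbin k) xx = - RHS / a.
    rewrite /zeta -/S1 -/S2 -/cc /RHS /a; field; rewrite ?gt_eqF //; lra.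
  rewrite Ez; move: hP; rewrite /P; lra.
have eA : - (A^T *m lamt) = hk + beta *: (A^T *m (A *m (x k.+1 - x k))).
  rewrite /hk /lamt.
  do 3 rewrite ?mulNmx ?mulmxN ?mulmxBr ?mulmxDr -?scalemxAr.
  by apply/matrixP => i j; rewrite !(mxE_add, mxE_opp, mxE_scale); ring.
have XB := xblock symM eA hzeta.
pose s0 := A *m x k.+1 + B *m y k + C *m z k - b.
have elt : lamt = lam k - beta *: s0 by [].
have ePy : A *m x k.+1 + C *m z k - b - beta^-1 *: lamh k = s0 - B *m y k - beta^-1 *: lamh k.
  rewrite /s0; apply/matrixP => i j; rewrite !(mxE_add, mxE_opp, mxE_scale); ring.
have hqy : forall v, beta / 2 * dot (A *m x k.+1 + B *m v + C *m z k - b - beta^-1 *: lamh k)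
                              (A *m x k.+1 + B *m v + C *m z k - b - beta^-1 *: lamh k)
             + 1 / 2 * sqnorm L1 (v - y k)
   = beta / 2 * dot (A *m x k.+1 + C *m z k - b - beta^-1 *: lamh k + B *m v)
                    (A *m x k.+1 + C *m z k - b - beta^-1 *: lamh k + B *m v)
             + 1 / 2 * sqnorm L1 (v - y k).
  move=> v.
  have -> : A *m x k.+1 + B *m v + C *m z k - b - beta^-1 *: lamh k
          = A *m x k.+1 + C *m z k - b - beta^-1 *: lamh k + B *m v.
    apply/matrixP => i j; rewrite !(mxE_add, mxE_opp, mxE_scale); ring.
  by [].
have [fy1 HY] := @yblock R n n2 Y cY g hg B L1 hL1 beta tau
   (A *m x k.+1 + C *m z k - b - beta^-1 *: lamh k) (lam k) lamt (lamh k) s0 (y k) (y k.+1)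
   (fun v => beta / 2 * dot (A *m x k.+1 + B *m v + C *m z k - b - beta^-1 *: lamh k)
                              (A *m x k.+1 + B *m v + C *m z k - b - beta^-1 *: lamh k)
             + 1 / 2 * sqnorm L1 (v - y k))
   hbeta (hlamh k) elt ePy (hy k) hqy.
have ePz : A *m x k.+1 + B *m y k - b - beta^-1 *: lamh k = s0 - C *m z k - beta^-1 *: lamh k.
  rewrite /s0; apply/matrixP => i j; rewrite !(mxE_add, mxE_opp, mxE_scale); ring.
have hqz : forall v, beta / 2 * dot (A *m x k.+1 + B *m y k + C *m v - b - beta^-1 *: lamh k)
                              (A *m x k.+1 + B *m y k + C *m v - b - beta^-1 *: lamh k)
             + 1 / 2 * sqnorm L2 (v - z k)
   = beta / 2 * dot (A *m x k.+1 + B *m y k - b - beta^-1 *: lamh k + C *m v)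
                    (A *m x k.+1 + B *m y k - b - beta^-1 *: lamh k + C *m v)
             + 1 / 2 * sqnorm L2 (v - z k).
  move=> v.
  have -> : A *m x k.+1 + B *m y k + C *m v - b - beta^-1 *: lamh k
          = A *m x k.+1 + B *m y k - b - beta^-1 *: lamh k + C *m v.
    apply/matrixP => i j; rewrite !(mxE_add, mxE_opp, mxE_scale); ring.
  by [].
have [fz1 HZ] := @yblock R n n3 Z cZ l hl C L2 hL2 beta tau
   (A *m x k.+1 + B *m y k - b - beta^-1 *: lamh k) (lam k) lamt (lamh k) s0 (z k) (z k.+1)
   (fun v => beta / 2 * dot (A *m x k.+1 + B *m y k + C *m v - b - beta^-1 *: lamh k)
                              (A *m x k.+1 + B *m y k + C *m v - b - beta^-1 *: lamh k)
             + 1 / 2 * sqnorm L2 (v - z k))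
   hbeta (hlamh k) elt ePz (hz k) hqz.
have HY' := HY _ Yyy.
have HZ' := HZ _ Zzz.
have EL : A *m x k.+1 + B *m y k.+1 + C *m z k.+1 - b
        = - (B *m (y k - y k.+1)) - C *m (z k - z k.+1) + beta^-1 *: (lam k - lamt).
  rewrite elt /s0 !mulmxBr.
  apply/matrixP => i j; rewrite !(mxE_add, mxE_opp, mxE_scale); field; by rewrite gt_eqF.
have J := jskew A B C b (x k.+1) (y k.+1) (z k.+1) lamt (xx - x k.+1) (yy - y k.+1) (zz - z k.+1) (ll - lamt).
rewrite !subrKC in J.
rewrite (wvecB xx (x k.+1) yy (y k.+1) zz (z k.+1) ll lamt).
rewrite (wvecB (x k) (x k.+1) (y k) (y k.+1) (z k) (z k.+1) (lam k) lamt).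
rewrite quad_expand /Jop dot_wvec J EL !dotDr !dotNr dotZr.
rewrite /Fw -[g (y k.+1)](fineK fy1) -[l (z k.+1)](fineK fz1).
apply: (le_trans _ (leeD2r _ (leeD2r _ (leeD (leeD (lexx (f xx)%:E) HY') HZ')))).
rewrite -?EFinD -?EFinN -?EFinD -?EFinB -?EFinD lee_fin.
move: XB; rewrite /f ?dotDr ?dotNr ?dotDr ?dotNr.
lra.
Qed.
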